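(* Let $\mathcal A$ be an NBA and let $R$ be a strict partial order on its states with $R\subseteq\ \subseteq^{\mathrm{bw\text{-}di}}$. Then $P(R,\mathrm{id})$ is good for pruning, i.e. $\mathcal L(\mathrm{Prune}(\mathcal A,P(R,\mathrm{id})))=\mathcal L(\mathcal A)$. In particular this holds for $R$ the strict part of backward direct trace inclusion.
   Context: An NBA is $\mathcal A=(\Sigma,Q,I,F,\delta)$, $\delta\subseteq Q\times\Sigma\times Q$, assumed forward and backward complete; initial traces start in $I$, fair traces are infinite and visit $F$ infinitely often, the language is the set of infinite words with an initial fair trace. Backward direct trace inclusion: $p\subseteq^{\mathrm{bw\text{-}di}}q$ iff for every finite word $\sigma_0\cdots\sigma_{m-1}$ and every initial finite trace $p_0\xrightarrow{\sigma_0}\cdots\xrightarrow{\sigma_{m-1}}p_m=p$ there is an initial finite trace $q_0\xrightarrow{\sigma_0}\cdots\xrightarrow{\sigma_{m-1}}q_m=q$ with $p_i\in F\Rightarrow q_i\in F$ for all $0\le i\le m$. Strict part: $p\subseteq q$ and not $q\subseteq p$. For $P\subseteq\delta\times\delta$, $\mathrm{Prune}(\mathcal A,P)$ has transition set $\{t\in\delta:\nexists t'\in\delta,\ (t,t')\in P\}$. For $R_b,R_f\subseteq Q\times Q$, $P(R_b,R_f)=\{((p,\sigma,r),(p',\sigma,r'))\in\delta\times\delta:p\,R_b\,p',\ r\,R_f\,r'\}$; $\mathrm{id}$ is the identity relation. *)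

(* Defs.v *)
From mathcomp Require Import all_boot.
Set Implicit Arguments.
Unset Strict Implicit.
Unset Printing Implicit Defensive.

Record NBA (Sigma Q : finType) := mkNBA {
  init : Q -> Prop;
  final : Q -> Prop;
  trans : Q -> Sigma -> Q -> Prop
}.

Section NBADefs.
Variables (Sigma Q : finType).
Implicit Types (A : NBA Sigma Q).

Definition transition : Type := (Q * Sigma * Q)%type.
Definition in_delta A (t : transition) : Prop :=
  let: (p, a, r) := t in trans A p a r.

Definition forward_complete A : Prop :=
  forall (p : Q) (a : Sigma), exists r, trans A p a r.
Definition backward_complete A : Prop :=
  forall (r : Q) (a : Sigma), exists p, trans A p a r.

Definition is_trace A (w : nat -> Sigma) (rho : nat -> Q) : Prop :=
  forall i, trans A (rho i) (w i) (rho i.+1).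

Definition fair A (rho : nat -> Q) : Prop :=
  forall n, exists m, n <= m /\ final A (rho m).

Definition accepts A (w : nat -> Sigma) : Prop :=
  exists rho : nat -> Q, init A (rho 0) /\ is_trace A w rho /\ fair A rho.

(* Backward direct trace inclusion p ⊆^{bw-di} q. A finite trace of length m
   is given by the first m+1 values of a function nat -> Q, the word by the
   first m letters of a function nat -> Sigma. *)
Definition bwdi A (p q : Q) : Prop :=
  forall (m : nat) (w : nat -> Sigma) (ps : nat -> Q),
    init A (ps 0) ->
    (forall i, i < m -> trans A (ps i) (w i) (ps i.+1)) ->
    ps m = p ->
    exists qs : nat -> Q,
      init A (qs 0) /\
      (forall i, i < m -> trans A (qs i) (w i) (qs i.+1)) /\
      qs m = q /\
      (forall i, i <= m -> final A (ps i) -> final A (qs i)).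

Definition strict_part (R : Q -> Q -> Prop) (p q : Q) : Prop :=
  R p q /\ ~ R q p.

Definition strict_partial_order (R : Q -> Q -> Prop) : Prop :=
  (forall p, ~ R p p) /\ (forall p q r, R p q -> R q r -> R p r).

Definition Prel A (Rb Rf : Q -> Q -> Prop) (t t' : transition) : Prop :=
  let: (p, a, r) := t in
  let: (p', a', r') := t' in
  in_delta A t /\ in_delta A t' /\ a = a' /\ Rb p p' /\ Rf r r'.

Definition idrel (p q : Q) : Prop := p = q.

Definition Prune A (P : transition -> transition -> Prop) : NBA Sigma Q :=
  mkNBA (init A) (final A)
    (fun p a r => trans A p a r /\
       ~ (exists t', in_delta A t' /\ P (p, a, r) t')).

Definition same_language (A B : NBA Sigma Q) : Prop :=
  forall w, accepts A w <-> accepts B w.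

End NBADefs.

(* Main.v *)
Require Import Defs.
From mathcomp Require Import all_boot.
From mathcomp Require Import zify.
From Stdlib Require Import Classical ClassicalEpsilon.
Set Implicit Arguments.
Unset Strict Implicit.
Unset Printing Implicit Defensive.

Lemma max_exists (Q : finType) (R : Q -> Q -> Prop) (S : Q -> Prop) :
  strict_partial_order R -> forall p, S p ->
  exists p', S p' /\ forall p'', S p'' -> ~ R p' p''.
Proof.
move=> [irr tr].
pose Rb p q := if excluded_middle_informative (R p q) then true else false.
have RbP p q : Rb p q <-> R p q.
  by rewrite /Rb; case: excluded_middle_informative.
pose cnt p := #|[pred x | Rb p x]|.
have dec p q : R p q -> cnt q < cnt p.
  move=> Hpq; apply: proper_card; apply/properP; split.
    apply/subsetP=> x; rewrite !inE => /RbP Hqx; apply/RbP; exact: tr Hpq Hqx.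
  exists q; rewrite !inE; first by apply/RbP.
  by apply/negP => /RbP /irr.
suff H : forall k p, cnt p <= k -> S p ->
    exists p', S p' /\ forall p'', S p'' -> ~ R p' p''.
  by move=> p Sp; exact: (H _ p (leqnn _) Sp).
elim=> [|k IH] p Hc Sp.
  exists p; split=> // p'' _ Hr; have := dec _ _ Hr; lia.
case: (classic (exists p'', S p'' /\ R p p'')) => [[p'' [Sp'' Hr]]|Hn].
  apply: (IH p'') => //; have := dec _ _ Hr; lia.
exists p; split=> // p'' Sp'' Hr; apply: Hn; by exists p''.
Qed.

Lemma finite_prune (Sigma Q : finType) (A : NBA Sigma Q) (R : Q -> Q -> Prop) :
  strict_partial_order R -> (forall p q, R p q -> bwdi A p q) ->
  forall (w : nat -> Sigma) m (ps : nat -> Q), init A (ps 0) ->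
  (forall i, i < m -> trans A (ps i) (w i) (ps i.+1)) ->
  exists qs, init A (qs 0) /\
    (forall i, i < m -> trans (Prune A (Prel A R (@idrel Q))) (qs i) (w i) (qs i.+1)) /\
    qs m = ps m /\ (forall i, i <= m -> final A (ps i) -> final A (qs i)).
Proof.
move=> Hso HR w; elim=> [|m IH] ps H0 Ht.
  by exists ps; split=> //; split=> // i; rewrite ltn0.
pose S p' := trans A p' (w m) (ps m.+1) /\ exists sg : nat -> Q, init A (sg 0) /\
   (forall i, i < m -> trans A (sg i) (w i) (sg i.+1)) /\ sg m = p' /\
   (forall i, i <= m -> final A (ps i) -> final A (sg i)).
have Sm : S (ps m).
  split; first exact: Ht.
  exists ps; split=> //; split; last by split.
  move=> i Hi; apply: Ht; lia.
have [ps' [[Htr [sg [Hs0 [Hst [Hsm Hsf]]]]] Hmax]] := max_exists Hso Sm.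
have [qs' [Hq0 [Hqt [Hqm Hqf]]]] := IH sg Hs0 Hst.
exists (fun i => if i == m.+1 then ps m.+1 else qs' i); split=> //=.
split; last split.
- move=> i Hi.
  have [Hlt|Heq] : i < m \/ i = m by lia.
    rewrite (_ : (i == m.+1) = false); last by apply/eqP; lia.
    rewrite (_ : (i.+1 == m.+1) = false); last by apply/eqP; lia.
    exact: Hqt.
  subst i; rewrite eqxx (_ : (m == m.+1) = false); last by apply/eqP; lia.
  rewrite Hqm Hsm; split=> //.
  case=> [[[p'' a''] r'']] [Hin HP]; move: HP => /= [_ [_ [Ha [Hr Hid]]]].
  rewrite /idrel in Hid; subst a'' r''.
  have [sg2 [H1 [H2 [H3 H4]]]] := HR _ _ Hr m w sg Hs0 Hst Hsm.
  apply: (Hmax p'') Hr; split=> //.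
  exists sg2; split=> //; split=> //; split=> // j Hj Hf.
  by apply: H4 => //; apply: Hsf.
- by rewrite eqxx.
- move=> i Hi Hf; case: eqP => [Heq|Hne]; first by subst.
  apply: Hqf; first lia.
  by apply: Hsf => //; lia.
Qed.

Definition Good (Sigma Q : finType) (B : NBA Sigma Q) (w : nat -> Sigma)
  (rho tau : nat -> Q) N :=
  init B (tau 0) /\ (forall i, i < N -> trans B (tau i) (w i) (tau i.+1)) /\
  (forall i, i <= N -> final B (rho i) -> final B (tau i)).

Lemma Good_mono (Sigma Q : finType) (B : NBA Sigma Q) w rho tau N N' :
  Good B w rho tau N -> N' <= N -> Good B w rho tau N'.
Proof.
move=> [H0 [H1 H2]] Hle; split=> //; split=> i Hi.
  apply: H1; lia.
apply: H2; lia.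
Qed.

Lemma Good_ext (Sigma Q : finType) (B : NBA Sigma Q) w rho tau tau' N :
  Good B w rho tau N -> (forall i, i <= N -> tau i = tau' i) -> Good B w rho tau' N.
Proof.
move=> [H0 [H1 H2]] He; split; first by rewrite -He.
split=> i Hi.
  rewrite -!He; [exact: H1| lia | lia].
rewrite -He //; exact: H2.
Qed.

Definition Ext (Sigma Q : finType) (B : NBA Sigma Q) w rho (s : nat -> Q) n :=
  forall N, n <= N -> exists tau, Good B w rho tau N /\ forall i, i < n -> tau i = s i.

Lemma step_ex (Sigma Q : finType) (B : NBA Sigma Q) w rho (s : nat -> Q) n :
  exists s', Ext B w rho s n ->
    (forall i, i < n -> s' i = s i) /\ Ext B w rho s' n.+1.
Proof.
case: (classic (Ext B w rho s n)) => [HE|HN]; last by exists s.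
apply: NNPP => Hno.
pose sq (q : Q) := fun i => if i == n then q else s i.
have H : forall q, exists N, n.+1 <= N /\
   ~ exists tau, Good B w rho tau N /\ forall i, i < n.+1 -> tau i = sq q i.
  move=> q; apply: NNPP => Hq; apply: Hno; exists (sq q) => _; split.
    by move=> i Hi; rewrite /sq (_ : (i == n) = false) //; apply/eqP; lia.
  move=> N HN; apply: NNPP => Hn; apply: Hq; exists N; split => //.
pose Nf q := proj1_sig (constructive_indefinite_description _ (H q)).
have NfP q := proj2_sig (constructive_indefinite_description _ (H q)).
have [tau [Hg Ha]] := HE (maxn n (\max_(q : Q) Nf q)) (leq_maxl _ _).
have [_ Hc] := NfP (tau n).
apply: Hc; exists tau; split.
  apply: Good_mono Hg _.
  have := leq_bigmax (F := Nf) (tau n); rewrite /Nf; lia.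
move=> i Hi; rewrite /sq; case: eqP => [->//|Hne]; apply: Ha; lia.
Qed.

Lemma koenig (Sigma Q : finType) (B : NBA Sigma Q) w rho :
  (forall N, exists tau, Good B w rho tau N) ->
  exists rho', init B (rho' 0) /\ is_trace B w rho' /\
     forall i, final B (rho i) -> final B (rho' i).
Proof.
move=> H.
have [t0 _] := H 0.
pose nx s n := proj1_sig (constructive_indefinite_description _ (step_ex B w rho s n)).
have nxP s n := proj2_sig (constructive_indefinite_description _ (step_ex B w rho s n)).
pose sq := fix f (n : nat) : nat -> Q := match n with 0 => t0 | n'.+1 => nx (f n') n' end.
have Hext : forall n, Ext B w rho (sq n) n.
  elim=> [|n IH] /=.
    move=> N _; have [tau Ht] := H N; exists tau; split=> // i; by rewrite ltn0.
  exact: (nxP (sq n) n IH).2.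
have Hagr : forall n i, i < n -> sq n.+1 i = sq n i.
  move=> n i Hi; exact: ((nxP (sq n) n (Hext n)).1 i Hi).
have Hstab : forall i k, sq (i.+1 + k) i = sq i.+1 i.
  move=> i; elim=> [|k IH]; first by rewrite addn0.
  rewrite addnS Hagr //; lia.
pose r i := sq i.+1 i.
have HG : forall N, Good B w rho r N.
  move=> N; have [tau [Hg Ha]] := Hext N.+1 N.+1 (leqnn _).
  apply: (Good_ext (Good_mono Hg (leqnSn N))) => i Hi.
  rewrite Ha; last lia.
  rewrite /r -(Hstab i (N - i)); congr sq; lia.
exists r; split; first by have [] := HG 0.
split.
  move=> i; have [_ [Ht _]] := HG i.+1; exact: Ht.
move=> i; have [_ [_ Hf]] := HG i; exact: Hf.
Qed.

Lemma bwdi_trans (Sigma Q : finType) (A : NBA Sigma Q) p q r :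
  bwdi A p q -> bwdi A q r -> bwdi A p r.
Proof.
move=> H1 H2 m w ps H0 Ht Hm.
have [qs [Q0 [Qt [Qm Qf]]]] := H1 m w ps H0 Ht Hm.
have [rs [R0 [Rt [Rm Rf]]]] := H2 m w qs Q0 Qt Qm.
exists rs; split=> //; split=> //; split=> // i Hi Hf.
by apply: Rf => //; apply: Qf.
Qed.

Theorem theorem5p2 :
  forall (Sigma Q : finType) (A : NBA Sigma Q),
    forward_complete A -> backward_complete A ->
    (forall R : Q -> Q -> Prop,
        strict_partial_order R ->
        (forall p q, R p q -> bwdi A p q) ->
        same_language (Prune A (Prel A R (@idrel Q))) A)
    /\
    same_language (Prune A (Prel A (strict_part (bwdi A)) (@idrel Q))) A.
Proof.
move=> Sigma Q A _ _.
have P1 : forall R : Q -> Q -> Prop,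
        strict_partial_order R ->
        (forall p q, R p q -> bwdi A p q) ->
        same_language (Prune A (Prel A R (@idrel Q))) A.
  move=> R Hso HR w; split.
    case=> rho [H0 [Ht Hf]]; exists rho; split=> //; split=> // i.
    exact: (Ht i).1.
  case=> rho [H0 [Ht Hf]].
  have [r [R0 [Rt Rf]]] :
      exists rho', init (Prune A (Prel A R (@idrel Q))) (rho' 0) /\
        is_trace (Prune A (Prel A R (@idrel Q))) w rho' /\
        forall i, final (Prune A (Prel A R (@idrel Q))) (rho i) ->
                  final (Prune A (Prel A R (@idrel Q))) (rho' i).
    apply: koenig => N.
    have [qs [Q0 [Qt [_ Qf]]]] := finite_prune Hso HR (w:=w) (m:=N) H0 (fun i _ => Ht i).
    by exists qs; split=> //; split.
  exists r; split=> //; split=> // n.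
  have [m [Hm Hfm]] := Hf n; exists m; split=> //; exact: Rf.
split=> //; apply: P1.
  split; first by move=> p [].
  move=> p q r [Hpq Nqp] [Hqr Nrq]; split; first exact: bwdi_trans Hpq Hqr.
  by move=> Hrp; apply: Nqp; exact: bwdi_trans Hqr Hrp.
by move=> p q [].
Qed.
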